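(* Let $(X,d_X)$ be a proper, doubling metric space, $p\in X$, and let $\eta:[0,\infty)\to[0,\infty)$ be a homeomorphism. Assume there is a sequence of points $p_n\in X$ with $p_n\to p$ such that $X$ is $\eta$-self-quasisymmetric at $p_n$ for every $n$. Then there exists a weak tangent $T_pX\in WT_p(X)$ such that $X$ is $\eta'$-quasisymmetrically embedded into $T_pX$, where $\eta'(t)=1/\eta^{-1}(1/t)$.
   Context: A homeomorphism $f:X\to Y$ between metric spaces is $\eta$-quasisymmetric if $d_Y(f(x),f(y))/d_Y(f(x),f(z))\le \eta(d_X(x,y)/d_X(x,z))$ for all $x,y,z\in X$ with $x\ne z$; an $\eta$-quasisymmetric embedding is an $\eta$-quasisymmetric homeomorphism onto its image. $X$ is $\eta$-self-quasisymmetric at a point $x$ if there is $r_x>0$ such that for every $0<r<r_x$ there exists a subset $U\subset B(x,r)$ and an $\eta$-quasisymmetric homeomorphism from $U$ onto $X$. Proper: closed balls are compact. Doubling: there is $C\ge1$ such that every subset of diameter $d$ is covered by at most $C$ subsets of diameter at most $d/2$. Pointed Gromov–Hausdorff convergence $(X_n,p_n,d_n)\to(Z,z,d)$ ($Z$ complete): for every $r,\varepsilon>0$ there is $n_0$ such that for all $n>n_0$ there is a map $g:B(p_n,r)\to Z$ with $g(p_n)=z$, $\sup_{x,y}|d_n(x,y)-d(g(x),g(y))|<\varepsilon$, and $B(z,r-\varepsilon)$ contained in the $\varepsilon$-neighborhood of $g(B(p_n,r))$. A weak tangent of $X$ at $p$ is a pointed Gromov–Hausdorff limit $(T_pX,p_\infty,g_p)$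 of $(X,q_n,d_X/\lambda_n)$ with $\lambda_n>0$, $\lambda_n\to0$ and $q_n\to p$; $WT_p(X)$ is the set of these. *)

(* Defs.v *)
From Stdlib Require Import Reals List.
Open Scope R_scope.

Record is_metric {X : Type} (d : X -> X -> R) : Prop := {
  met_nonneg : forall x y, 0 <= d x y;
  met_sep : forall x y, d x y = 0 <-> x = y;
  met_sym : forall x y, d x y = d y x;
  met_tri : forall x y z, d x z <= d x y + d y z }.

Definition is_open {X : Type} (d : X -> X -> R) (U : X -> Prop) : Prop :=
  forall x, U x -> exists e, 0 < e /\ forall y, d x y < e -> U y.

Definition is_compact {X : Type} (d : X -> X -> R) (K : X -> Prop) : Prop :=
  forall (I : Type) (U : I -> X -> Prop),
    (forall i, is_open d (U i)) ->
    (forall x, K x -> exists i, U i x) ->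
    exists l : list I, forall x, K x -> exists i, In i l /\ U i x.

Definition is_proper {X : Type} (d : X -> X -> R) : Prop :=
  forall x r, is_compact d (fun y => d x y <= r).

Definition is_doubling {X : Type} (d : X -> X -> R) : Prop :=
  exists C : nat, (1 <= C)%nat /\
    forall (A : X -> Prop) (r : R), 0 <= r ->
      (forall x y, A x -> A y -> d x y <= r) ->
      exists B : nat -> X -> Prop,
        (forall i, (i < C)%nat -> forall x y, B i x -> B i y -> d x y <= r / 2) /\
        (forall x, A x -> exists i, (i < C)%nat /\ B i x).

Definition seq_conv {X : Type} (d : X -> X -> R) (u : nat -> X) (l : X) : Prop :=
  forall e, 0 < e -> exists N, forall n, (N <= n)%nat -> d (u n) l < e.

Definition is_cauchy {X : Type} (d : X -> X -> R) (u : nat -> X) : Prop :=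
  forall e, 0 < e -> exists N, forall m n, (N <= m)%nat -> (N <= n)%nat -> d (u m) (u n) < e.

Definition is_complete {X : Type} (d : X -> X -> R) : Prop :=
  forall u, is_cauchy d u -> exists l, seq_conv d u l.

Definition mcontinuous {X Y : Type} (dX : X -> X -> R) (dY : Y -> Y -> R) (f : X -> Y) : Prop :=
  forall x e, 0 < e -> exists delta, 0 < delta /\
    forall y, dX x y < delta -> dY (f x) (f y) < e.

Definition homeo_onto_image {X Y : Type} (dX : X -> X -> R) (dY : Y -> Y -> R) (f : X -> Y) : Prop :=
  (forall x y, f x = f y -> x = y) /\
  mcontinuous dX dY f /\
  (forall x e, 0 < e -> exists delta, 0 < delta /\
     forall y, dY (f x) (f y) < delta -> dX x y < e).

Definition qs_inequality {X Y : Type} (dX : X -> X -> R) (dY : Y -> Y -> R)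
  (eta : R -> R) (f : X -> Y) : Prop :=
  forall x y z, x <> z ->
    dY (f x) (f y) / dY (f x) (f z) <= eta (dX x y / dX x z).

Definition qs_embedding {X Y : Type} (dX : X -> X -> R) (dY : Y -> Y -> R)
  (eta : R -> R) (f : X -> Y) : Prop :=
  homeo_onto_image dX dY f /\ qs_inequality dX dY eta f.

Definition qs_homeomorphism {X Y : Type} (dX : X -> X -> R) (dY : Y -> Y -> R)
  (eta : R -> R) (f : X -> Y) : Prop :=
  qs_embedding dX dY eta f /\ (forall y, exists x, f x = y).

Definition restr_dist {X : Type} (d : X -> X -> R) (U : X -> Prop) :
  {u : X | U u} -> {u : X | U u} -> R :=
  fun a b => d (proj1_sig a) (proj1_sig b).

Definition self_qs_at {X : Type} (d : X -> X -> R) (eta : R -> R) (x : X) : Prop :=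
  exists rx, 0 < rx /\
    forall r, 0 < r < rx ->
      exists U : X -> Prop, (forall u, U u -> d x u < r) /\
        exists g : {u : X | U u} -> X, qs_homeomorphism (restr_dist d U) d eta g.

Definition cont_on_nonneg (f : R -> R) : Prop :=
  forall t e, 0 <= t -> 0 < e -> exists delta, 0 < delta /\
    forall s, 0 <= s -> Rabs (s - t) < delta -> Rabs (f s - f t) < e.

Definition homeo_nonneg_pair (eta etainv : R -> R) : Prop :=
  (forall t, 0 <= t -> 0 <= eta t) /\
  (forall t, 0 <= t -> 0 <= etainv t) /\
  (forall t, 0 <= t -> etainv (eta t) = t) /\
  (forall t, 0 <= t -> eta (etainv t) = t) /\
  cont_on_nonneg eta /\ cont_on_nonneg etainv.

(** eta'(t) = 1 / etainv (1/t), extended by eta'(0) = 0 (its limit). *)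
Definition eta_prime (etainv : R -> R) (t : R) : R :=
  if Req_EM_T t 0 then 0 else 1 / etainv (1 / t).

Definition pGH_conv {X Z : Type} (dn : nat -> X -> X -> R) (pn : nat -> X)
  (dZ : Z -> Z -> R) (z : Z) : Prop :=
  forall r eps, 0 < r -> 0 < eps ->
    exists n0, forall n, (n0 < n)%nat ->
      exists g : X -> Z, g (pn n) = z /\
        (exists s, s < eps /\ forall x y, dn n (pn n) x < r -> dn n (pn n) y < r ->
            Rabs (dn n x y - dZ (g x) (g y)) <= s) /\
        (forall w, dZ z w < r - eps ->
            exists x, dn n (pn n) x < r /\ dZ w (g x) < eps).

Definition weak_tangent {X Z : Type} (d : X -> X -> R) (p : X)
  (dZ : Z -> Z -> R) (z : Z) : Prop :=
  is_metric dZ /\ is_complete dZ /\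
  exists (lam : nat -> R) (q : nat -> X),
    (forall n, 0 < lam n) /\ seq_conv (fun a b => Rabs (a - b)) lam 0 /\
    seq_conv d q p /\
    pGH_conv (fun n x y => d x y / lam n) q dZ z.

(* Main.v *)
Require Import Defs.
From Stdlib Require Import Reals Lra Lia ClassicalEpsilon Classical FunctionalExtensionality PropExtensionality ProofIrrelevance.
Open Scope R_scope.

Section Eta.
Variables eta etainv : R -> R.
Hypothesis H : homeo_nonneg_pair eta etainv.

Lemma eta_cont_ext : forall w, continuity (fun t => eta (Rmax 0 t) - w).
Proof.
  intros w x. destruct H as (_ & _ & _ & _ & Hc & _).
  intros e He. destruct (Hc (Rmax 0 x) e (Rmax_l 0 x) He) as (del & Hdel & Hd).
  exists del; split; [lra|]. intros y [_ Hy]. simpl in *. unfold R_dist in *.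
  replace (eta (Rmax 0 y) - w - (eta (Rmax 0 x) - w)) with (eta (Rmax 0 y) - eta (Rmax 0 x)) by ring.
  apply Hd. apply Rmax_l.
  eapply Rle_lt_trans; [|exact Hy].
  unfold Rmax; destruct (Rle_dec 0 y); destruct (Rle_dec 0 x); unfold Rabs;
  repeat destruct Rcase_abs; lra.
Qed.

Lemma eta_ivt : forall x y w, 0 <= x -> x < y -> eta x < w < eta y ->
  exists s, x < s < y /\ eta s = w.
Proof.
  intros x y w Hx Hxy Hw.
  destruct (IVT (fun t => eta (Rmax 0 t) - w) x y (eta_cont_ext w) Hxy) as (s & Hs & Hs2).
  - rewrite Rmax_right by lra. lra.
  - rewrite Rmax_right by lra. lra.
  - rewrite Rmax_right in Hs2 by lra. exists s. split; [|lra].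
    split; destruct (Req_dec s x); destruct (Req_dec s y); subst; try lra.
Qed.

Lemma eta_ivt' : forall x y w, 0 <= x -> x < y -> eta y < w < eta x ->
  exists s, x < s < y /\ eta s = w.
Proof.
  intros x y w Hx Hxy Hw.
  destruct (IVT (fun t => - (eta (Rmax 0 t) - w)) x y) as (s & Hs & Hs2).
  - intro z. apply continuity_opp. apply eta_cont_ext.
  - exact Hxy.
  - rewrite Rmax_right by lra. lra.
  - rewrite Rmax_right by lra. lra.
  - rewrite Rmax_right in Hs2 by lra. exists s. split; [|lra].
    split; destruct (Req_dec s x); destruct (Req_dec s y); subst; try lra.
Qed.

Lemma eta_inj : forall a b, 0 <= a -> 0 <= b -> eta a = eta b -> a = b.
Proof.
  intros a b Ha Hb E. destruct H as (_ & _ & Hie & _).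
  rewrite <- (Hie a Ha), <- (Hie b Hb), E. reflexivity.
Qed.

Lemma eta0 : eta 0 = 0.
Proof.
  destruct H as (Hp & Hip & Hie & Hei & _).
  set (t0 := etainv 0). assert (Ht0 : 0 <= t0) by (apply Hip; lra).
  assert (E0 : eta t0 = 0) by (apply Hei; lra).
  destruct (Req_dec t0 0) as [Z|NZ]. { rewrite Z in E0. exact E0. }
  exfalso.
  assert (P0 : 0 < eta 0).
  { destruct (Rle_lt_or_eq_dec _ _ (Hp 0 (Rle_refl 0))) as [h|h]; auto.
    exfalso. apply NZ. apply eta_inj; lra. }
  assert (P1 : 0 < eta (t0 + 1)).
  { destruct (Rle_lt_or_eq_dec _ _ (Hp (t0+1) ltac:(lra))) as [h|h]; auto.
    exfalso. assert (t0 + 1 = t0) by (apply eta_inj; lra). lra. }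
  set (w := Rmin (eta 0) (eta (t0+1)) / 2).
  assert (Hw : 0 < w) by (unfold w, Rmin; destruct Rle_dec; lra).
  assert (Hw1 : w < eta 0) by (unfold w, Rmin; destruct Rle_dec; lra).
  assert (Hw2 : w < eta (t0+1)) by (unfold w, Rmin; destruct Rle_dec; lra).
  destruct (eta_ivt' 0 t0 w ltac:(lra) ltac:(lra) ltac:(lra)) as (s1 & Hs1 & E1).
  destruct (eta_ivt t0 (t0+1) w ltac:(lra) ltac:(lra) ltac:(lra)) as (s2 & Hs2 & E2).
  assert (s1 = s2) by (apply eta_inj; lra). lra.
Qed.

Lemma eta_incr : forall a b, 0 <= a -> a < b -> eta a < eta b.
Proof.
  intros a b Ha Hab. destruct H as (Hp & Hip & Hie & Hei & _).
  destruct (Rlt_or_le (eta a) (eta b)) as [h|h]; auto. exfalso.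
  assert (Pb : 0 < eta b).
  { destruct (Rle_lt_or_eq_dec _ _ (Hp b ltac:(lra))) as [h'|h']; auto.
    exfalso. assert (b = 0) by (apply eta_inj; try lra; rewrite eta0; lra). lra. }
  destruct (Req_dec a 0) as [Z|NZ].
  { subst. rewrite eta0 in h. lra. }
  destruct (Req_dec (eta a) (eta b)) as [E|NE].
  { assert (a = b) by (apply eta_inj; lra). lra. }
  destruct (eta_ivt 0 a (eta b)) as (s & Hs & Es); try lra.
  rewrite eta0; lra.
  assert (s = b) by (apply eta_inj; lra). lra.
Qed.

Lemma etainv_le : forall u v, 0 <= u -> u <= v -> etainv u <= etainv v.
Proof.
  intros u v Hu Huv. destruct H as (Hp & Hip & Hie & Hei & _).
  destruct (Rle_or_lt (etainv u) (etainv v)) as [h|h]; auto.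
  exfalso. assert (eta (etainv v) < eta (etainv u)) by (apply eta_incr; auto; apply Hip; lra).
  rewrite !Hei in H0; lra.
Qed.

Lemma etainv_pos : forall u, 0 < u -> 0 < etainv u.
Proof.
  intros u Hu. destruct H as (Hp & Hip & Hie & Hei & _).
  destruct (Rle_lt_or_eq_dec _ _ (Hip u ltac:(lra))) as [h|h]; auto.
  exfalso. assert (eta (etainv u) = u) by (apply Hei; lra). rewrite <- h, eta0 in H0. lra.
Qed.

Lemma etainv_big : forall M, 0 <= M -> forall u, eta M <= u -> M <= etainv u.
Proof.
  intros M HM u Hu. destruct H as (Hp & Hip & Hie & Hei & _).
  rewrite <- (Hie M HM). apply etainv_le; auto.
Qed.

Definition etap := eta_prime etainv.

Lemma etap_pos : forall t, 0 < t -> 0 < etap t.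
Proof.
  intros t Ht. unfold etap, eta_prime. destruct Req_EM_T; [lra|].
  assert (0 < etainv (1/t)) by (apply etainv_pos; apply Rdiv_lt_0_compat; lra).
  apply Rdiv_lt_0_compat; lra.
Qed.

Lemma etap_nonneg : forall t, 0 <= t -> 0 <= etap t.
Proof.
  intros t Ht. destruct (Req_dec t 0). subst. unfold etap, eta_prime. destruct Req_EM_T; lra.
  left; apply etap_pos; lra.
Qed.

Lemma etap_mono : forall s t, 0 < s -> s <= t -> etap s <= etap t.
Proof.
  intros s t Hs Hst. unfold etap, eta_prime.
  destruct Req_EM_T; [lra|]. destruct Req_EM_T; [lra|].
  assert (0 < etainv (1/t)) by (apply etainv_pos; apply Rdiv_lt_0_compat; lra).
  assert (etainv (1/t) <= etainv (1/s)).
  { apply etainv_le. left; apply Rdiv_lt_0_compat; lra.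
    unfold Rdiv. rewrite !Rmult_1_l. apply Rinv_le_contravar; lra. }
  unfold Rdiv in *; rewrite !Rmult_1_l in *. apply Rinv_le_contravar; lra.
Qed.

Lemma etap_small : forall e, 0 < e -> exists del, 0 < del /\
  forall t, 0 < t < del -> etap t < e.
Proof.
  intros e He. destruct H as (Hp & Hip & Hie & Hei & _).
  set (K := eta (2/e) + 1).
  assert (HK : 0 < K) by (unfold K; assert (0 <= eta (2/e)) by (apply Hp; left; apply Rdiv_lt_0_compat; lra); lra).
  exists (1/K). split. apply Rdiv_lt_0_compat; lra.
  intros t Ht. unfold etap, eta_prime. destruct Req_EM_T; [lra|].
  assert (H1 : 2/e <= etainv (1/t)).
  { apply etainv_big. left; apply Rdiv_lt_0_compat; lra.
    assert (K < 1/t).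
    { destruct Ht as [Ht1 Ht2]. apply (Rmult_lt_compat_l K) in Ht2; auto.
      unfold Rdiv in *. rewrite Rmult_1_l in *. rewrite Rinv_r in Ht2 by lra.
      apply (Rmult_lt_compat_l (/t)) in Ht2. 2: apply Rinv_0_lt_compat; lra.
      rewrite Rmult_1_r in Ht2. replace (/t * (K * t)) with K in Ht2 by (field; lra). lra. }
    unfold K in H0. lra. }
  assert (0 < 2 / e) by (apply Rdiv_lt_0_compat; lra).
  unfold Rdiv in *. rewrite Rmult_1_l in *.
  apply Rle_lt_trans with (/ (2 * /e)). apply Rinv_le_contravar. lra. rewrite Rmult_1_l; lra.
  rewrite Rinv_mult, Rinv_inv. lra.
Qed.

End Eta.


Record ultra (U : (nat -> Prop) -> Prop) : Prop := {
  U_up : forall A B : nat -> Prop, U A -> (forall n, A n -> B n) -> U B;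
  U_and : forall A B : nat -> Prop, U A -> U B -> U (fun n => A n /\ B n);
  U_nempty : forall A : nat -> Prop, U A -> exists n, A n;
  U_ult : forall A : nat -> Prop, U A \/ U (fun n => ~ A n);
  U_cof : forall m, U (fun n => le m n) }.

Section UL.
Variable U : (nat -> Prop) -> Prop.
Hypothesis HU : ultra U.

Lemma U_true : U (fun _ => True).
Proof. apply (U_up _ HU (fun n => (0 <= n)%nat)); auto. apply (U_cof _ HU). Qed.

Lemma U_all : forall A : nat -> Prop, (forall n, A n) -> U A.
Proof. intros. apply (U_up _ HU _ _ U_true); auto. Qed.

Lemma U_not_both : forall A, U A -> U (fun n => ~ A n) -> False.
Proof.
  intros A H1 H2. destruct (U_nempty _ HU _ (U_and _ HU _ _ H1 H2)) as (n & a & b). auto.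
Qed.

Lemma U_finite_union : forall (P : nat -> nat -> Prop) N,
  U (fun n => exists i, (i < N)%nat /\ P i n) -> exists i, (i < N)%nat /\ U (P i).
Proof.
  intros P N. induction N as [|N IH]; intros HN.
  - destruct (U_nempty _ HU _ HN) as (n & i & Hi & _). lia.
  - destruct (U_ult _ HU (P N)) as [h|h].
    + exists N; split; auto.
    + destruct IH as (i & Hi & Hi2).
      * apply (U_up _ HU _ _ (U_and _ HU _ _ HN h)). intros n ((i & Hi & Hp) & Hn).
        exists i; split; auto. destruct (Nat.eq_dec i N); subst; [contradiction|lia].
      * exists i; split; auto.
Qed.

Lemma U_forall_lt : forall (P : nat -> nat -> Prop) N,
  (forall i, (i < N)%nat -> U (P i)) -> U (fun n => forall i, (i < N)%nat -> P i n).
Proof.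
  intros P N. induction N as [|N IH]; intros H.
  - apply U_all. intros; lia.
  - apply (U_up _ HU _ _ (U_and _ HU _ _ (IH (fun i Hi => H i ltac:(lia))) (H N ltac:(lia)))).
    intros n [H1 H2] i Hi. destruct (Nat.eq_dec i N); subst; auto. apply H1; lia.
Qed.

Definition is_ulim (a : nat -> R) (L : R) : Prop :=
  forall e, 0 < e -> U (fun n => Rabs (a n - L) < e).

Lemma ulim_exists : forall a M, (forall n, Rabs (a n) <= M) -> exists L, is_ulim a L.
Proof.
  intros a M HM.
  set (S := fun t => U (fun n => t <= a n)).
  assert (Hb : bound S).
  { exists M. intros t Ht. destruct (U_nempty _ HU _ Ht) as (n & Hn).
    specialize (HM n). unfold Rabs in HM; destruct Rcase_abs; lra. }
  assert (Hne : exists t, S t).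
  { exists (-M). apply U_all. intro n. specialize (HM n). unfold Rabs in HM; destruct Rcase_abs; lra. }
  destruct (completeness S Hb Hne) as (L & HL1 & HL2).
  exists L. intros e He.
  assert (A1 : U (fun n => L - e/2 <= a n)).
  { destruct (classic (exists t, S t /\ L - e/2 < t)) as [(t & Ht & Hlt)|Hn].
    - apply (U_up _ HU _ _ Ht). intros; lra.
    - exfalso. assert (L <= L - e/2); [|lra]. apply HL2. intros t Ht.
      destruct (Rle_or_lt t (L - e/2)); auto. exfalso; apply Hn; eauto. }
  assert (A2 : U (fun n => ~ (L + e/2 <= a n))).
  { destruct (U_ult _ HU (fun n => L + e/2 <= a n)) as [h|h]; auto.
    exfalso. assert (L + e/2 <= L) by (apply HL1; exact h). lra. }
  apply (U_up _ HU _ _ (U_and _ HU _ _ A1 A2)). intros n [h1 h2].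
  unfold Rabs; destruct Rcase_abs; lra.
Qed.

Lemma ulim_unique : forall a L1 L2, is_ulim a L1 -> is_ulim a L2 -> L1 = L2.
Proof.
  intros a L1 L2 H1 H2. destruct (Req_dec L1 L2) as [|NE]; auto. exfalso.
  set (e := Rabs (L1 - L2) / 2).
  assert (He : 0 < e) by (unfold e; assert (0 < Rabs (L1 - L2)) by (apply Rabs_pos_lt; lra); lra).
  destruct (U_nempty _ HU _ (U_and _ HU _ _ (H1 e He) (H2 e He))) as (n & h1 & h2).
  assert (Rabs (L1 - L2) <= Rabs (a n - L1) + Rabs (a n - L2)).
  { replace (L1 - L2) with (-(a n - L1) + (a n - L2)) by ring.
    eapply Rle_trans. apply Rabs_triang. rewrite Rabs_Ropp. lra. }
  unfold e in *. lra.
Qed.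

Lemma ulim_le : forall a b A B, is_ulim a A -> is_ulim b B ->
  U (fun n => a n <= b n) -> A <= B.
Proof.
  intros a b A B Ha Hb Hab. destruct (Rle_or_lt A B) as [|h]; auto. exfalso.
  set (e := (A - B)/2). assert (He : 0 < e) by (unfold e; lra).
  destruct (U_nempty _ HU _ (U_and _ HU _ _ Hab (U_and _ HU _ _ (Ha e He) (Hb e He)))) as (n & h1 & h2 & h3).
  unfold Rabs in *; repeat destruct Rcase_abs; unfold e in *; lra.
Qed.

Lemma ulim_const : forall c, is_ulim (fun _ => c) c.
Proof. intros c e He. apply U_all. intros; rewrite Rminus_diag, Rabs_R0; lra. Qed.

Lemma ulim_plus : forall a b A B, is_ulim a A -> is_ulim b B ->
  is_ulim (fun n => a n + b n) (A + B).
Proof.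
  intros a b A B Ha Hb e He.
  apply (U_up _ HU _ _ (U_and _ HU _ _ (Ha (e/2) ltac:(lra)) (Hb (e/2) ltac:(lra)))).
  intros n [h1 h2]. replace (a n + b n - (A + B)) with ((a n - A) + (b n - B)) by ring.
  eapply Rle_lt_trans. apply Rabs_triang. lra.
Qed.

Lemma ulim_scal : forall a A c, is_ulim a A -> is_ulim (fun n => c * a n) (c * A).
Proof.
  intros a A c Ha e He.
  apply (U_up _ HU _ _ (Ha (e / (Rabs c + 1)) ltac:(apply Rdiv_lt_0_compat; [lra|pose proof (Rabs_pos c); lra]))).
  intros n h. replace (c * a n - c * A) with (c * (a n - A)) by ring. rewrite Rabs_mult.
  pose proof (Rabs_pos c). pose proof (Rabs_pos (a n - A)).
  apply Rle_lt_trans with ((Rabs c + 1) * Rabs (a n - A)). nra.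
  apply (Rmult_lt_compat_l (Rabs c + 1)) in h; [|lra].
  replace ((Rabs c + 1) * (e / (Rabs c + 1))) with e in h by (field; lra). lra.
Qed.

Lemma ulim_lt_U : forall a A c, is_ulim a A -> A < c -> U (fun n => a n < c).
Proof.
  intros a A c Ha h. apply (U_up _ HU _ _ (Ha (c - A) ltac:(lra))).
  intros n h1. unfold Rabs in h1; destruct Rcase_abs; lra.
Qed.

Lemma ulim_gt_U : forall a A c, is_ulim a A -> c < A -> U (fun n => c < a n).
Proof.
  intros a A c Ha h. apply (U_up _ HU _ _ (Ha (A - c) ltac:(lra))).
  intros n h1. unfold Rabs in h1; destruct Rcase_abs; lra.
Qed.

Definition ulim (a : nat -> R) : R :=
  epsilon (inhabits 0) (fun L => is_ulim a L).

Lemma ulim_spec : forall a M, (forall n, Rabs (a n) <= M) -> is_ulim a (ulim a).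
Proof.
  intros a M HM. unfold ulim. apply epsilon_spec. eapply ulim_exists; eauto.
Qed.

End UL.


Lemma cover_k {X} (d : X -> X -> R) (C : nat) :
  (1 <= C)%nat ->
  (forall (A : X -> Prop) (r : R), 0 <= r ->
      (forall x y, A x -> A y -> d x y <= r) ->
      exists B : nat -> X -> Prop,
        (forall i, (i < C)%nat -> forall x y, B i x -> B i y -> d x y <= r / 2) /\
        (forall x, A x -> exists i, (i < C)%nat /\ B i x)) ->
  forall k (A : X -> Prop) r a0, 0 <= r -> (forall x y, A x -> A y -> d x y <= r) -> A a0 ->
  exists pts : nat -> X, (forall i, A (pts i)) /\
    forall y, A y -> exists i, (i < C ^ k)%nat /\ d y (pts i) <= r / 2 ^ k.
Proof.
  intros HC Hdb k. induction k as [|k IH]; intros A r a0 Hr Hdiam Ha0.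
  - exists (fun _ => a0). split; auto. intros y Hy. exists O. split. simpl; lia.
    simpl. unfold Rdiv. rewrite Rinv_1, Rmult_1_r. auto.
  - destruct (Hdb A r Hr Hdiam) as (B & HB1 & HB2).
    assert (HP : forall i, exists P : nat -> X, (forall j, A (P j)) /\
      ((i < C)%nat -> forall y, A y -> B i y -> exists j, (j < C ^ k)%nat /\ d y (P j) <= (r/2) / 2 ^ k)).
    { intro i. destruct (classic ((i < C)%nat /\ exists y0, A y0 /\ B i y0)) as [(Hi & y0 & Hy0 & Hy0')|Hn].
      - destruct (IH (fun y => A y /\ B i y) (r/2) y0 ltac:(lra)) as (P & HP1 & HP2).
        + intros x y [_ hx] [_ hy]. apply (HB1 i Hi); auto.
        + auto.
        + exists P. split. intro j; apply HP1. intros _ y Hy Hy'. apply HP2; auto.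
      - exists (fun _ => a0). split; auto. intros Hi y Hy Hy'. exfalso; apply Hn; eauto. }
    set (F := fun i => proj1_sig (constructive_indefinite_description _ (HP i))).
    assert (HF : forall i, (forall j, A (F i j)) /\
      ((i < C)%nat -> forall y, A y -> B i y -> exists j, (j < C ^ k)%nat /\ d y (F i j) <= (r/2) / 2 ^ k)).
    { intro i. unfold F. destruct constructive_indefinite_description; simpl; auto. }
    set (N := (C ^ k)%nat).
    assert (HN : (1 <= N)%nat). { unfold N. clear -HC. induction k; simpl; nia. }
    exists (fun l => F (l / N)%nat (l mod N)%nat). split.
    + intro l. apply HF.
    + intros y Hy. destruct (HB2 y Hy) as (i & Hi & Hiy).
      destruct (proj2 (HF i) Hi y Hy Hiy) as (j & Hj & Hdj).
      exists (i * N + j)%nat. split.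
      * rewrite Nat.pow_succ_r'. fold N. nia.
      * rewrite <- (Nat.div_unique (i * N + j) N i j) by lia.
        rewrite <- (Nat.mod_unique (i * N + j) N i j) by lia.
        replace (r / 2 ^ S k) with (r / 2 / 2 ^ k). auto.
        simpl. field. apply pow_nonzero. lra.
Qed.


Lemma Rdiv_le_0_compat : forall a b, 0 <= a -> 0 < b -> 0 <= a / b.
Proof. intros. apply Rle_mult_inv_pos; auto. Qed.

Lemma dist_tri_abs {X} (d : X -> X -> R) (Hd : is_metric d) : forall x y z,
  Rabs (d x y - d x z) <= d y z.
Proof.
  intros. pose proof (met_tri d Hd x y z). pose proof (met_tri d Hd x z y).
  pose proof (met_sym d Hd y z).
  unfold Rabs; destruct Rcase_abs; lra.
Qed.

Section ZC.
Variable X : Type.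
Variable d : X -> X -> R.
Hypothesis Hd : is_metric d.
Variable U : (nat -> Prop) -> Prop.
Hypothesis HU : ultra U.
Variable lam : nat -> R.
Hypothesis Hlam : forall n, 0 < lam n.
Variable q : nat -> X.

Definition adm (x : nat -> X) : Prop := exists M, forall n, d (q n) (x n) / lam n <= M.
Definition dd (x y : nat -> X) (n : nat) : R := d (x n) (y n) / lam n.

Lemma dd_nonneg : forall x y n, 0 <= dd x y n.
Proof. intros. unfold dd. apply Rdiv_le_0_compat. apply (met_nonneg d Hd). apply Hlam. Qed.

Lemma dd_sym : forall x y n, dd x y n = dd y x n.
Proof. intros. unfold dd. rewrite (met_sym d Hd). reflexivity. Qed.

Lemma dd_tri : forall x y z n, dd x z n <= dd x y n + dd y z n.
Proof.
  intros. unfold dd. pose proof (Hlam n). unfold Rdiv. rewrite <- Rmult_plus_distr_r.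
  apply Rmult_le_compat_r. left; apply Rinv_0_lt_compat; auto. apply (met_tri d Hd).
Qed.

Lemma dd_self : forall x n, dd x x n = 0.
Proof. intros. unfold dd. rewrite (proj2 (met_sep d Hd _ _) eq_refl). unfold Rdiv; ring. Qed.

Lemma adm_q : adm q.
Proof. exists 0. intro n. fold (dd q q n). rewrite dd_self. lra. Qed.

Lemma dd_bound : forall x y, adm x -> adm y -> exists M, forall n, Rabs (dd x y n) <= M.
Proof.
  intros x y [Mx Hx] [My Hy]. exists (Mx + My). intro n.
  rewrite Rabs_pos_eq by apply dd_nonneg.
  pose proof (dd_tri x q y n) as H. rewrite (dd_sym x q) in H. specialize (Hx n). specialize (Hy n).
  unfold dd in *. lra.
Qed.

Definition D (x y : nat -> X) : R := ulim U (dd x y).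

Lemma D_spec : forall x y, adm x -> adm y -> is_ulim U (dd x y) (D x y).
Proof. intros x y Hx Hy. destruct (dd_bound x y Hx Hy) as [M HM]. eapply ulim_spec; eauto. Qed.

Lemma is_ulim_ext : forall a b L, (forall n, a n = b n) -> is_ulim U a L -> is_ulim U b L.
Proof. intros a b L E H e He. apply (U_up _ HU _ _ (H e He)). intros n; rewrite E; auto. Qed.

Lemma D_nonneg : forall x y, adm x -> adm y -> 0 <= D x y.
Proof.
  intros. apply (ulim_le U HU (fun _ => 0) (dd x y)). apply ulim_const; auto. apply D_spec; auto.
  apply U_all; auto. intros; apply dd_nonneg.
Qed.

Lemma D_self : forall x, adm x -> D x x = 0.
Proof.
  intros. apply (ulim_unique U HU (dd x x)). apply D_spec; auto.
  apply (is_ulim_ext (fun _ => 0)). intros; rewrite dd_self; auto. apply ulim_const; auto.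
Qed.

Lemma D_sym : forall x y, adm x -> adm y -> D x y = D y x.
Proof.
  intros. apply (ulim_unique U HU (dd x y)). apply D_spec; auto.
  apply (is_ulim_ext (dd y x)). intros; apply dd_sym. apply D_spec; auto.
Qed.

Lemma D_tri : forall x y z, adm x -> adm y -> adm z -> D x z <= D x y + D y z.
Proof.
  intros. apply (ulim_le U HU (dd x z) (fun n => dd x y n + dd y z n)).
  apply D_spec; auto. apply ulim_plus; auto; apply D_spec; auto.
  apply U_all; auto. intros; apply dd_tri.
Qed.

Lemma D_le : forall x y c, adm x -> adm y -> U (fun n => dd x y n <= c) -> D x y <= c.
Proof.
  intros. apply (ulim_le U HU (dd x y) (fun _ => c)); auto. apply D_spec; auto. apply ulim_const; auto.
Qed.

Lemma D_ge : forall x y c, adm x -> adm y -> U (fun n => c <= dd x y n) -> c <= D x y.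
Proof.
  intros. apply (ulim_le U HU (fun _ => c) (dd x y)); auto. apply ulim_const; auto. apply D_spec; auto.
Qed.

Lemma D_lt_U : forall x y c, adm x -> adm y -> D x y < c -> U (fun n => dd x y n < c).
Proof. intros. eapply ulim_lt_U; eauto. apply D_spec; auto. Qed.

Lemma D_gt_U : forall x y c, adm x -> adm y -> c < D x y -> U (fun n => c < dd x y n).
Proof. intros. eapply ulim_gt_U; eauto. apply D_spec; auto. Qed.

Definition cls (x : nat -> X) : (nat -> X) -> Prop := fun y => adm y /\ D x y = 0.
Definition Z : Type := {S : (nat -> X) -> Prop | exists x, adm x /\ S = cls x}.

Definition rep (s : Z) : nat -> X :=
  proj1_sig (constructive_indefinite_description _ (proj2_sig s)).

Lemma rep_spec : forall s, adm (rep s) /\ proj1_sig s = cls (rep s).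
Proof. intros s. unfold rep. destruct constructive_indefinite_description as [x Hx]. exact Hx. Qed.

Lemma rep_adm : forall s, adm (rep s).
Proof. intros; apply rep_spec. Qed.

Definition mkZ (x : nat -> X) (H : adm x) : Z := exist _ (cls x) (ex_intro _ x (conj H eq_refl)).

Definition mk (x : nat -> X) : Z :=
  match excluded_middle_informative (adm x) with
  | left H => mkZ x H
  | right _ => mkZ q adm_q end.

Lemma mk_cls : forall x, adm x -> proj1_sig (mk x) = cls x.
Proof. intros x H. unfold mk. destruct excluded_middle_informative; [reflexivity|contradiction]. Qed.

Lemma cls_eq : forall x y, adm x -> adm y -> D x y = 0 -> cls x = cls y.
Proof.
  intros x y Hx Hy E. apply functional_extensionality. intro w.
  apply propositional_extensionality. unfold cls. split; intros [Hw Ew]; split; auto.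
  - pose proof (D_tri y x w Hy Hx Hw) as T. pose proof (D_nonneg y w Hy Hw). rewrite (D_sym y x) in T; auto. lra.
  - pose proof (D_tri x y w Hx Hy Hw). pose proof (D_nonneg x w Hx Hw). lra.
Qed.

Lemma D_rep_mk : forall x, adm x -> D (rep (mk x)) x = 0.
Proof.
  intros x Hx. destruct (rep_spec (mk x)) as [Ha E]. rewrite mk_cls in E; auto.
  assert (Hc : cls x x) by (split; auto; apply D_self; auto).
  rewrite E in Hc. apply Hc.
Qed.

Definition dZ (s t : Z) : R := D (rep s) (rep t).

Lemma D_congr : forall x x' y y', adm x -> adm x' -> adm y -> adm y' ->
  D x x' = 0 -> D y y' = 0 -> D x y = D x' y'.
Proof.
  intros x x' y y' Hx Hx' Hy Hy' E1 E2.
  pose proof (D_tri x x' y Hx Hx' Hy). pose proof (D_tri x' y' y Hx' Hy' Hy).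
  pose proof (D_tri x' x y' Hx' Hx Hy'). pose proof (D_tri x y y' Hx Hy Hy').
  rewrite (D_sym x' x) in *; auto. rewrite (D_sym y' y) in *; auto. lra.
Qed.

Lemma dZ_mk : forall x y, adm x -> adm y -> dZ (mk x) (mk y) = D x y.
Proof.
  intros. unfold dZ. apply D_congr; auto using rep_adm, D_rep_mk.
Qed.

Lemma dZ_mk_l : forall x t, adm x -> dZ (mk x) t = D x (rep t).
Proof.
  intros. unfold dZ. apply D_congr; auto using rep_adm, D_rep_mk. apply D_self, rep_adm.
Qed.

Lemma Z_eq : forall s t : Z, proj1_sig s = proj1_sig t -> s = t.
Proof.
  intros [s Hs] [t Ht] E. simpl in E. subst t. f_equal. apply proof_irrelevance.
Qed.

Lemma dZ_metric : is_metric dZ.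
Proof.
  unfold dZ. constructor.
  - intros. apply D_nonneg; apply rep_adm.
  - intros s t. split.
    + intros E. apply Z_eq. rewrite (proj2 (rep_spec s)), (proj2 (rep_spec t)).
      apply cls_eq; auto using rep_adm.
    + intros ->. apply D_self, rep_adm.
  - intros. apply D_sym; apply rep_adm.
  - intros. apply D_tri; apply rep_adm.
Qed.


Fixpoint Aset (xs : nat -> nat -> X) (j n : nat) : Prop :=
  match j with
  | O => True
  | S j' => Aset xs j' n /\ (j' < n)%nat /\ dd (xs j') (xs (S j')) n < (1/2)^j'
  end.

Lemma A_U : forall xs, (forall j, adm (xs j)) -> (forall j, D (xs j) (xs (S j)) < (1/2)^j) ->
  forall j, U (Aset xs j).
Proof.
  intros xs Ha Hx j. induction j as [|j IH]; simpl.
  - apply U_all; auto.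
  - apply (U_and _ HU _ _ IH). apply (U_and _ HU).
    + apply (U_up _ HU _ _ (U_cof _ HU (S j))). intros; lia.
    + apply D_lt_U; auto.
Qed.

Lemma A_mono : forall xs k n, Aset xs k n -> forall j, (j <= k)%nat -> Aset xs j n.
Proof.
  intros xs k n. induction k as [|k IH]; intros H j Hj.
  - replace j with O by lia. exact I.
  - destruct (Nat.eq_dec j (S k)) as [->|NE]; auto. apply IH. apply H. lia.
Qed.

Lemma A_le : forall xs j n, Aset xs j n -> (j <= n)%nat.
Proof. intros xs [|j] n H; simpl in H; lia. Qed.

Lemma A_chain : forall xs k n, Aset xs k n -> forall j, (j <= k)%nat ->
  dd (xs j) (xs k) n <= 2 * (1/2)^j - 2 * (1/2)^k.
Proof.
  intros xs k n. induction k as [|k IH]; intros H j Hj.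
  - replace j with O by lia. rewrite dd_self. lra.
  - destruct (Nat.eq_dec j (S k)) as [->|NE]. { rewrite dd_self. lra. }
    destruct H as (H1 & H2 & H3).
    pose proof (IH H1 j ltac:(lia)). pose proof (dd_tri (xs j) (xs k) (xs (S k)) n).
    simpl. lra.
Qed.

Fixpoint srch (xs : nat -> nat -> X) (j n : nat) : nat :=
  match j with
  | O => O
  | S j' => if excluded_middle_informative (Aset xs (S j') n) then S j' else srch xs j' n
  end.

Lemma srch_A : forall xs j n, Aset xs (srch xs j n) n.
Proof.
  intros xs j n. induction j as [|j IH]; simpl. exact I.
  destruct excluded_middle_informative; auto.
Qed.

Lemma srch_max : forall xs j n i, (i <= j)%nat -> Aset xs i n -> (i <= srch xs j n)%nat.
Proof.
  intros xs j n. induction j as [|j IH]; intros i Hi HA; simpl. lia.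
  destruct excluded_middle_informative as [h|h]. lia.
  destruct (Nat.eq_dec i (S j)) as [->|NE]. contradiction. apply IH; auto; lia.
Qed.

Fixpoint cummax (f : nat -> nat) (j : nat) : nat :=
  match j with O => f O | S j' => Nat.max (cummax f j') (f (S j')) end.

Lemma cummax_ge : forall f j, (f j <= cummax f j)%nat.
Proof. intros f [|j]; simpl; lia. Qed.

Lemma cummax_mono : forall f j k, (j <= k)%nat -> (cummax f j <= cummax f k)%nat.
Proof.
  intros f j k H. induction H. lia. simpl. lia.
Qed.

Lemma half_pow_pos : forall j, 0 < (1/2)^j.
Proof. intros. apply pow_lt. lra. Qed.

Lemma Z_complete : is_complete dZ.
Proof.
  intros u Hu.
  assert (HN : forall j, exists N, forall m m', (N <= m)%nat -> (N <= m')%nat -> dZ (u m) (u m') < (1/2)^j).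
  { intro j. apply (Hu _ (half_pow_pos j)). }
  set (Nf := fun j => proj1_sig (constructive_indefinite_description _ (HN j))).
  assert (HNf : forall j m m', (Nf j <= m)%nat -> (Nf j <= m')%nat -> dZ (u m) (u m') < (1/2)^j).
  { intro j. unfold Nf. destruct constructive_indefinite_description; simpl; auto. }
  set (Mf := cummax Nf).
  set (xs := fun j => rep (u (Mf j))).
  assert (Hxa : forall j, adm (xs j)) by (intros; apply rep_adm).
  assert (Hxs : forall j, D (xs j) (xs (S j)) < (1/2)^j).
  { intro j. apply HNf. apply cummax_ge. eapply Nat.le_trans. apply cummax_ge. apply cummax_mono. lia. }
  set (kk := fun n => srch xs n n).
  set (y := fun n => xs (kk n) n).
  assert (Hy : adm y).
  { destruct (Hxa O) as [M0 HM0]. exists (M0 + 2). intro n.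
    pose proof (dd_tri q (xs O) y n). pose proof (HM0 n).
    pose proof (A_chain xs (kk n) n (srch_A xs n n) O ltac:(lia)).
    pose proof (half_pow_pos (kk n)). unfold dd, y in *. simpl in *. lra. }
  assert (HJ : forall j, D (xs j) y <= 2 * (1/2)^j).
  { intro j. apply D_le; auto. apply (U_up _ HU _ _ (A_U xs Hxa Hxs j)). intros n Hn.
    assert (Hk : (j <= kk n)%nat) by (apply srch_max; auto; eapply A_le; eauto).
    pose proof (A_chain xs (kk n) n (srch_A xs n n) j Hk).
    pose proof (half_pow_pos (kk n)). unfold dd, y in *. lra. }
  exists (mk y). intros e He.
  destruct (pow_lt_1_zero (1/2) ltac:(rewrite Rabs_pos_eq; lra) (e/3) ltac:(lra)) as [J HJJ].
  exists (Mf J). intros m Hm.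
  destruct (dZ_metric) as [_ _ Hsym Htri].
  eapply Rle_lt_trans. apply (Htri _ (u (Mf J))).
  assert (A1 : dZ (u m) (u (Mf J)) < (1/2)^J).
  { apply HNf. eapply Nat.le_trans; [apply cummax_ge|exact Hm]. apply cummax_ge. }
  assert (A2 : dZ (u (Mf J)) (mk y) <= 2 * (1/2)^J).
  { rewrite Hsym, dZ_mk_l; auto. rewrite D_sym; auto using rep_adm. apply HJ. }
  specialize (HJJ J (le_n J)). rewrite Rabs_pos_eq in HJJ by (left; apply half_pow_pos). lra.
Qed.

Hypothesis Hdbl : is_doubling d.

Definition zq : Z := mk q.

Lemma Dq_rep : forall w, dZ zq w = D q (rep w).
Proof. intros. unfold zq. apply dZ_mk_l. apply adm_q. Qed.

Lemma Z_net : forall R del, 0 < R -> 0 < del ->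
  exists m (ys : nat -> nat -> X), ys O = q /\ (forall i, adm (ys i)) /\
    forall w, dZ zq w <= R + 1 -> exists i, (i < m)%nat /\ dZ w (mk (ys i)) < del.
Proof.
  intros R del HR Hdel.
  destruct Hdbl as (C & HC & Hdb).
  destruct (pow_lt_1_zero (1/2) ltac:(rewrite Rabs_pos_eq; lra) (del / (2 * (R + 2))))
    as [k Hk]. { apply Rdiv_lt_0_compat; lra. }
  specialize (Hk k (le_n k)). rewrite Rabs_pos_eq in Hk by (left; apply half_pow_pos).
  set (rho := 2 * (R + 2) * (1/2)^k).
  assert (Hrho : rho < del).
  { unfold rho. apply (Rmult_lt_compat_l (2 * (R+2))) in Hk; [|lra].
    replace (2 * (R + 2) * (del / (2 * (R + 2)))) with del in Hk by (field; lra). lra. }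
  assert (HP : forall n, exists pts : nat -> X, (forall i, d (q n) (pts i) <= (R + 2) * lam n) /\
     forall y, d (q n) y <= (R + 2) * lam n ->
       exists i, (i < C ^ k)%nat /\ d y (pts i) <= (2 * (R + 2) * lam n) / 2 ^ k).
  { intro n. pose proof (Hlam n).
    apply (cover_k d C HC Hdb k (fun y => d (q n) y <= (R + 2) * lam n) (2 * (R + 2) * lam n) (q n)).
    - nra.
    - intros x y Hx Hy. pose proof (met_tri d Hd x (q n) y). rewrite (met_sym d Hd x (q n)) in H0. lra.
    - rewrite (proj2 (met_sep d Hd _ _) eq_refl). nra. }
  set (pts := fun n => proj1_sig (constructive_indefinite_description _ (HP n))).
  assert (Hpts : forall n, (forall i, d (q n) (pts n i) <= (R + 2) * lam n) /\
     forall y, d (q n) y <= (R + 2) * lam n ->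
       exists i, (i < C ^ k)%nat /\ d y (pts n i) <= (2 * (R + 2) * lam n) / 2 ^ k).
  { intro n. unfold pts. destruct constructive_indefinite_description; simpl; auto. }
  set (ys := fun i => match i with O => q | S i' => fun n => pts n i' end).
  assert (Hys : forall i, adm (ys i)).
  { intros [|i]. apply adm_q. exists (R + 2). intro n. simpl. pose proof (Hlam n).
    pose proof (proj1 (Hpts n) i). apply (Rmult_le_reg_r (lam n)); auto.
    unfold Rdiv; rewrite Rmult_assoc, Rinv_l, Rmult_1_r by lra. lra. }
  exists (S (C ^ k)), ys. split; [reflexivity|]. split; [exact Hys|].
  intros w Hw. set (y := rep w). assert (Hya : adm y) by apply rep_adm.
  rewrite Dq_rep in Hw. fold y in Hw.
  assert (U1 : U (fun n => dd q y n < R + 2)) by (apply D_lt_U; auto using adm_q; lra).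
  assert (U2 : U (fun n => exists i, (i < C ^ k)%nat /\ dd y (ys (S i)) n <= rho)).
  { apply (U_up _ HU _ _ U1). intros n Hn. pose proof (Hlam n).
    destruct (proj2 (Hpts n) (y n)) as (i & Hi & Hd2).
    - unfold dd in Hn. apply (Rmult_lt_compat_r (lam n)) in Hn; auto.
      unfold Rdiv in Hn; rewrite Rmult_assoc, Rinv_l, Rmult_1_r in Hn by lra. lra.
    - exists i. split; auto. unfold dd, ys, rho. simpl.
      apply (Rmult_le_reg_r (lam n)); auto.
      unfold Rdiv; rewrite Rmult_assoc, Rinv_l, Rmult_1_r by lra.
      unfold Rdiv in Hd2. replace ((1 * / 2) ^ k) with (/ 2 ^ k) by (rewrite <- pow_inv; f_equal; lra).
      replace (2 * (R + 2) * (/ 2 ^ k) * lam n) with (2 * (R + 2) * lam n * / 2 ^ k) by ring.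
      exact Hd2. }
  destruct (U_finite_union U HU (fun i n => dd y (ys (S i)) n <= rho) _ U2) as (i & Hi & Hu).
  exists (S i). split; [lia|].
  destruct dZ_metric as [_ _ Hsym _]. rewrite Hsym, dZ_mk_l by auto.
  fold y. rewrite D_sym by auto. apply Rle_lt_trans with rho; auto. apply D_le; auto.
Qed.

Definition Good (n : nat) (R del : R) : Prop :=
  exists g : X -> Z, g (q n) = zq /\
    (exists s, s < del /\ forall x y, d (q n) x / lam n < R -> d (q n) y / lam n < R ->
        Rabs (d x y / lam n - dZ (g x) (g y)) <= s) /\
    (forall w, dZ zq w < R - del -> exists x, d (q n) x / lam n < R /\ dZ w (g x) < del).

Lemma Good_mono : forall n R del r eps, 0 < R -> Good n R del -> r <= R -> 2 * del <= eps ->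
  0 < del -> Good n r eps.
Proof.
  intros n R del r eps HR (g & Hg1 & (s & Hs & Hg2) & Hg3) Hr Heps Hdel.
  exists g. split; auto. split.
  - exists s. split; [lra|]. intros x y Hx Hy. apply Hg2; lra.
  - intros w Hw. destruct (Hg3 w ltac:(lra)) as (x & Hx & Hwx). exists x. split; [|lra].
    destruct dZ_metric as [_ Hsep Hsym Htri].
    assert (Hq : d (q n) (q n) / lam n < R) by (rewrite (proj2 (met_sep d Hd _ _) eq_refl); unfold Rdiv; lra).
    pose proof (Hg2 _ _ Hq Hx). rewrite Hg1 in H.
    pose proof (Htri zq w (g x)). unfold Rabs in H; destruct Rcase_abs; lra.
Qed.

Lemma dist_swap_bound : forall a b a' b', Rabs (d a b - d a' b') <= d a a' + d b b'.
Proof.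
  intros. pose proof (met_tri d Hd a a' b). pose proof (met_tri d Hd a' b b').
  pose proof (met_tri d Hd a' a b'). pose proof (met_tri d Hd a b b'). pose proof (met_tri d Hd a' b' b).
  pose proof (met_sym d Hd a a'). pose proof (met_sym d Hd b b').
  unfold Rabs; destruct Rcase_abs; lra.
Qed.

Lemma Good_U : forall R del, 0 < R -> 0 < del -> U (fun n => Good n R del).
Proof.
  intros R del HR Hdel. set (e := del / 10). assert (He : 0 < e) by (unfold e; lra).
  destruct (Z_net R e HR He) as (m & ys & Hys0 & Hysa & Hnet).
  destruct dZ_metric as [Hnn Hsep Hsym Htri].
  assert (S1 : U (fun n => forall i, (i < m)%nat -> forall j, (j < m)%nat ->
                  Rabs (dd (ys i) (ys j) n - D (ys i) (ys j)) < e)).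
  { apply U_forall_lt; auto. intros i Hi. apply U_forall_lt; auto. intros j Hj.
    apply D_spec; auto. }
  set (P := fun n => forall y, d (q n) y / lam n < R + 1 ->
            exists i, (i < m)%nat /\ d y (ys i n) / lam n < 2 * e).
  assert (S2 : U P).
  { destruct (U_ult _ HU P) as [h|h]; auto. exfalso.
    set (bad := fun n y => d (q n) y / lam n < R + 1 /\
                 forall i, (i < m)%nat -> ~ (d y (ys i n) / lam n < 2 * e)).
    set (yy := fun n => let y := epsilon (inhabits (q n)) (bad n) in
                 if Rlt_dec (d (q n) y / lam n) (R + 1) then y else q n).
    assert (Hbad : forall n, ~ P n -> bad n (yy n)).
    { intros n Hn. assert (Hex : exists y, bad n y).
      { apply NNPP. intro Hne. apply Hn. intros y Hy. apply NNPP. intro Hy2. apply Hne.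
        exists y. split; auto. intros i Hi Hlt. apply Hy2. exists i; auto. }
      pose proof (epsilon_spec (inhabits (q n)) (bad n) Hex) as Hs.
      unfold yy. simpl. destruct Rlt_dec as [_|Hf]; auto. exfalso; apply Hf, Hs. }
    assert (Hyya : adm yy).
    { exists (R + 1). intro n. unfold yy. simpl. destruct Rlt_dec; [lra|].
      rewrite (proj2 (met_sep d Hd _ _) eq_refl). unfold Rdiv. lra. }
    assert (Hz : dZ zq (mk yy) <= R + 1).
    { unfold zq. rewrite dZ_mk by auto using adm_q. apply D_le; auto using adm_q.
      apply U_all; auto. intro n. unfold dd, yy. simpl. destruct Rlt_dec; [lra|].
      rewrite (proj2 (met_sep d Hd _ _) eq_refl). unfold Rdiv. lra. }
    destruct (Hnet _ Hz) as (i & Hi & Hdi). rewrite dZ_mk in Hdi by auto.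
    pose proof (D_lt_U _ _ _ Hyya (Hysa i) Hdi) as Hu.
    destruct (U_nempty _ HU _ (U_and _ HU _ _ h Hu)) as (n & Hn1 & Hn2).
    apply (proj2 (Hbad n Hn1) i Hi). unfold dd in Hn2. lra. }
  apply (U_up _ HU _ _ (U_and _ HU _ _ S1 S2)). intros n [H1 H2].
  pose proof (Hlam n) as Hl.
  set (g := fun y => if excluded_middle_informative (y = q n) then zq
           else mk (ys (epsilon (inhabits O) (fun i => (i < m)%nat /\ d y (ys i n) / lam n < 2 * e)))).
  assert (Hm : (0 < m)%nat).
  { destruct (H2 (q n)) as (i & Hi & _). rewrite (proj2 (met_sep d Hd _ _) eq_refl). unfold Rdiv; lra. lia. }
  assert (Gspec : forall y, d (q n) y / lam n < R + 1 -> exists i, (i < m)%nat /\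
              d y (ys i n) / lam n < 2 * e /\ g y = mk (ys i)).
  { intros y Hy. unfold g. destruct excluded_middle_informative as [E|NE].
    - exists O. rewrite Hys0. subst y. split; auto. split; auto.
      rewrite (proj2 (met_sep d Hd _ _) eq_refl). unfold Rdiv; lra.
    - set (Q := fun i => (i < m)%nat /\ d y (ys i n) / lam n < 2 * e).
      assert (HQ : Q (epsilon (inhabits O) Q)) by (apply epsilon_spec; apply H2; auto).
      exists (epsilon (inhabits O) Q). destruct HQ. auto. }
  exists g. split.
  { unfold g. destruct excluded_middle_informative; [reflexivity|congruence]. }
  split.
  - exists (5 * e). split; [unfold e; lra|]. intros x y Hx Hy.
    destruct (Gspec x ltac:(lra)) as (i & Hi & Hxi & ->).
    destruct (Gspec y ltac:(lra)) as (j & Hj & Hyj & ->).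
    rewrite dZ_mk by auto. specialize (H1 i Hi j Hj). unfold dd in H1.
    pose proof (dist_swap_bound x y (ys i n) (ys j n)).
    assert (Rabs (d x y / lam n - d (ys i n) (ys j n) / lam n) <= d x (ys i n) / lam n + d y (ys j n) / lam n).
    { replace (d x y / lam n - d (ys i n) (ys j n) / lam n) with ((d x y - d (ys i n) (ys j n)) / lam n) by (field; lra).
      unfold Rdiv. rewrite Rabs_mult, (Rabs_pos_eq (/ lam n)) by (left; apply Rinv_0_lt_compat; lra).
      rewrite <- Rmult_plus_distr_r. apply Rmult_le_compat_r; [left; apply Rinv_0_lt_compat; lra|auto]. }
    pose proof (Rabs_triang (d x y / lam n - d (ys i n) (ys j n) / lam n) (d (ys i n) (ys j n) / lam n - D (ys i) (ys j))).
    replace (d x y / lam n - d (ys i n) (ys j n) / lam n + (d (ys i n) (ys j n) / lam n - D (ys i) (ys j)))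
      with (d x y / lam n - D (ys i) (ys j)) in H3 by ring. lra.
  - intros w Hw. destruct (Hnet w ltac:(lra)) as (i & Hi & Hwi).
    exists (ys i n).
    assert (Hqi : dZ zq (mk (ys i)) = D (ys O) (ys i)) by (unfold zq; rewrite Hys0, dZ_mk; auto using adm_q).
    pose proof (Htri zq w (mk (ys i))).
    specialize (H1 O Hm i Hi) as H1a. rewrite Hys0 in H1a. unfold dd in H1a. rewrite Hys0 in Hqi.
    assert (Hx : d (q n) (ys i n) / lam n < R - del + 2 * e).
    { unfold Rabs in H1a; destruct Rcase_abs; lra. }
    split. unfold e in Hx. lra.
    destruct (Gspec (ys i n) ltac:(unfold e in Hx; lra)) as (j & Hj & Hij & ->).
    pose proof (H1 i Hi j Hj) as H1b. unfold dd in H1b.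
    pose proof (Htri w (mk (ys i)) (mk (ys j))) as T3. rewrite dZ_mk in T3 by auto.
    unfold Rabs in H1b; destruct Rcase_abs; unfold e in *; lra.
Qed.

End ZC.


Lemma dist_pos {X} (d : X -> X -> R) (Hd : is_metric d) : forall x y, x <> y -> 0 < d x y.
Proof.
  intros x y Hxy. destruct (Rle_lt_or_eq_dec _ _ (met_nonneg d Hd x y)) as [h|h]; auto.
  exfalso. apply Hxy. apply (met_sep d Hd). auto.
Qed.

Lemma dist_self {X} (d : X -> X -> R) (Hd : is_metric d) : forall x, d x x = 0.
Proof. intros. apply (met_sep d Hd). reflexivity. Qed.

Lemma qs_homeo {X Y} (dX : X -> X -> R) (dY : Y -> Y -> R) (HX : is_metric dX) (HY : is_metric dY)
  (f : X -> Y) (et : R -> R) :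
  (forall x z, x <> z -> f x <> f z) -> qs_inequality dX dY et f ->
  (forall s t, 0 < s -> s <= t -> et s <= et t) ->
  (forall t, 0 < t -> 0 < et t) ->
  (forall e, 0 < e -> exists del, 0 < del /\ forall t, 0 < t < del -> et t < e) ->
  (forall x : X, exists b, b <> x) ->
  homeo_onto_image dX dY f.
Proof.
  intros Hinj Hqs Hmono Hpos Hsmall Htwo. split; [|split].
  - intros x y E. apply NNPP; intro NE. exact (Hinj x y NE E).
  - intros x e He. destruct (Htwo x) as [b Hb].
    set (K := dY (f x) (f b)). assert (HK : 0 < K) by (apply (dist_pos dY HY); apply Hinj; auto).
    assert (Hxb : 0 < dX x b) by (apply (dist_pos dX HX); auto).
    destruct (Hsmall (e / K) ltac:(apply Rdiv_lt_0_compat; lra)) as (del0 & Hd0 & Hs).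
    exists (del0 * dX x b). split. nra.
    intros y Hy. destruct (classic (x = y)) as [<-|NE].
    + rewrite (dist_self dY HY). lra.
    + pose proof (Hqs x y b ltac:(auto)) as Q. fold K in Q.
      assert (Hr : 0 < dX x y / dX x b < del0).
      { split. apply Rdiv_lt_0_compat; auto. apply (dist_pos dX HX); auto.
        apply (Rmult_lt_reg_r (dX x b)); auto. unfold Rdiv; rewrite Rmult_assoc, Rinv_l, Rmult_1_r; lra. }
      pose proof (Hs _ Hr).
      assert (dY (f x) (f y) / K < e / K) by lra.
      unfold Rdiv in H0. apply Rmult_lt_reg_r in H0; auto. apply Rinv_0_lt_compat; auto.
  - intros x e He. destruct (Htwo x) as [b Hb].
    set (K := dY (f x) (f b)). assert (HK : 0 < K) by (apply (dist_pos dY HY); apply Hinj; auto).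
    assert (Hxb : 0 < dX x b) by (apply (dist_pos dX HX); auto).
    set (t0 := dX x b / e). assert (Ht0 : 0 < t0) by (apply Rdiv_lt_0_compat; lra).
    pose proof (Hpos t0 Ht0) as Hp0.
    exists (K / et t0). split. apply Rdiv_lt_0_compat; lra.
    intros y Hy. destruct (Rlt_or_le (dX x y) e) as [h|h]; auto. exfalso.
    assert (NE : x <> y). { intro E; subst. rewrite (dist_self dX HX) in h. lra. }
    pose proof (Hqs x b y NE) as Q. fold K in Q.
    assert (Hxy : 0 < dY (f x) (f y)) by (apply (dist_pos dY HY); apply Hinj; auto).
    assert (et (dX x b / dX x y) <= et t0).
    { apply Hmono. apply Rdiv_lt_0_compat; auto; lra.
      unfold t0, Rdiv. apply Rmult_le_compat_l; [lra|]. apply Rinv_le_contravar; lra. }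
    assert (K <= et t0 * dY (f x) (f y)).
    { apply (Rmult_le_reg_r (/ dY (f x) (f y))). apply Rinv_0_lt_compat; auto.
      rewrite Rmult_assoc, Rinv_r, Rmult_1_r by lra. fold (Rdiv K (dY (f x) (f y))). lra. }
    apply (Rmult_lt_compat_l (et t0)) in Hy; auto.
    replace (et t0 * (K / et t0)) with K in Hy by (field; lra). lra.
Qed.

Lemma selfqs_inv {X} (d : X -> X -> R) (Hd : is_metric d) (eta etainv : R -> R)
  (He : homeo_nonneg_pair eta etainv) (x0 : X) :
  self_qs_at d eta x0 -> forall rho, 0 < rho ->
  exists h : X -> X, (forall y, d x0 (h y) < rho) /\ (forall y y', h y = h y' -> y = y') /\
    (forall x y z, x <> z -> d (h x) (h y) / d (h x) (h z) <= etap etainv (d x y / d x z)).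
Proof.
  intros (rx & Hrx & Hs) rho Hrho.
  destruct (Hs (Rmin (rx/2) rho)) as (Uu & HUu & g & ((Hginj & _ & _) & Hgqs) & Hgs).
  { split. apply Rmin_glb_lt; lra. eapply Rle_lt_trans. apply Rmin_l. lra. }
  set (h' := fun y => proj1_sig (constructive_indefinite_description _ (Hgs y))).
  assert (Hh' : forall y, g (h' y) = y).
  { intro y. unfold h'. destruct constructive_indefinite_description; auto. }
  assert (Hh'inj : forall y y', h' y = h' y' -> y = y').
  { intros y y' E. rewrite <- (Hh' y), <- (Hh' y'), E. auto. }
  assert (Hpinj : forall u v : {u : X | Uu u}, proj1_sig u = proj1_sig v -> u = v).
  { intros [u pu] [v pv] E. simpl in E. subst. f_equal. apply proof_irrelevance. }
  exists (fun y => proj1_sig (h' y)). split; [|split].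
  - intro y. eapply Rlt_le_trans. apply HUu. apply (proj2_sig (h' y)). apply Rmin_r.
  - intros y y' E. apply Hh'inj, Hpinj, E.
  - intros x y z Hxz.
    destruct (classic (x = y)) as [<-|Nxy].
    + rewrite (dist_self d Hd), (dist_self d Hd). unfold Rdiv. rewrite !Rmult_0_l.
      apply (etap_nonneg eta etainv He); lra.
    + assert (NA : h' x <> h' y) by (intro E; apply Nxy, Hh'inj, E).
      assert (NC : h' x <> h' z) by (intro E; apply Hxz, Hh'inj, E).
      pose proof (Hgqs (h' x) (h' z) (h' y) NA) as Q. rewrite !Hh' in Q. unfold restr_dist in Q.
      set (P := d x y) in *. set (Qd := d x z) in *.
      set (P' := d (proj1_sig (h' x)) (proj1_sig (h' y))) in *.
      set (Q' := d (proj1_sig (h' x)) (proj1_sig (h' z))) in *.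
      assert (HP : 0 < P) by (apply (dist_pos d Hd); auto).
      assert (HQ : 0 < Qd) by (apply (dist_pos d Hd); auto).
      assert (HP' : 0 < P') by (apply (dist_pos d Hd); intro E; apply NA, Hpinj, E).
      assert (HQ' : 0 < Q') by (apply (dist_pos d Hd); intro E; apply NC, Hpinj, E).
      assert (I1 : etainv (Qd / P) <= Q' / P').
      { pose proof He as He2. destruct He2 as (_ & _ & Hie & _).
        rewrite <- (Hie (Q' / P')) by (left; apply Rdiv_lt_0_compat; auto).
        apply (etainv_le eta etainv He); auto. left; apply Rdiv_lt_0_compat; auto. }
      assert (I2 : 0 < etainv (Qd / P)) by (apply (etainv_pos eta etainv He); apply Rdiv_lt_0_compat; auto).
      unfold etap, eta_prime. destruct Req_EM_T as [E|_].
      { exfalso. assert (0 < P / Qd) by (apply Rdiv_lt_0_compat; auto). lra. }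
      replace (1 / (P / Qd)) with (Qd / P) by (field; lra).
      replace (P' / Q') with (/ (Q' / P')) by (field; lra).
      unfold Rdiv at 2. rewrite Rmult_1_l. apply Rinv_le_contravar; auto.
Qed.

Section Main.
Variable X : Type.
Variable d : X -> X -> R.
Hypothesis Hd : is_metric d.
Variables eta etainv : R -> R.
Hypothesis Heta : homeo_nonneg_pair eta etainv.
Variable U : (nat -> Prop) -> Prop.
Hypothesis HU : ultra U.
Variable H : nat -> X -> X.
Variables a b : X.
Hypothesis Hab : a <> b.
Hypothesis Hinj : forall n y y', H n y = H n y' -> y = y'.
Hypothesis Hqs : forall n x y z, x <> z ->
  d (H n x) (H n y) / d (H n x) (H n z) <= etap etainv (d x y / d x z).

Definition lamH (n : nat) : R := d (H n a) (H n b).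
Definition qH (n : nat) : X := H n a.

Lemma lamH_pos : forall n, 0 < lamH n.
Proof. intro n. apply (dist_pos d Hd). intro E. apply Hab. eapply Hinj; eauto. Qed.

Definition hs (x : X) : nat -> X := fun n => H n x.

Lemma hs_adm : forall x, adm X d lamH qH (hs x).
Proof. intro x. exists (etap etainv (d a x / d a b)). intro n. apply Hqs; auto. Qed.

Lemma hs_lower : forall x z, x <> z -> exists c, 0 < c /\ forall n, c <= dd X d lamH (hs x) (hs z) n.
Proof.
  intros x z Hxz.
  set (b' := if excluded_middle_informative (x = a) then b else a).
  assert (Hb' : b' <> x). { unfold b'. destruct excluded_middle_informative; subst; auto. }
  assert (HK2 : 0 < etap etainv (d x b' / d x z)).
  { apply etap_pos with eta; auto. apply Rdiv_lt_0_compat; apply (dist_pos d Hd); auto. }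
  assert (Hc1 : exists c1, 0 < c1 /\ forall n, c1 <= d (H n x) (H n b') / lamH n).
  { unfold b'. destruct excluded_middle_informative as [->|Nxa].
    - exists 1. split; [lra|]. intro n. unfold lamH. rewrite Rdiv_diag. lra.
      apply Rgt_not_eq, lamH_pos.
    - assert (HK1 : 0 < etap etainv (d a b / d a x)).
      { apply etap_pos with eta; auto. apply Rdiv_lt_0_compat; apply (dist_pos d Hd); auto. }
      exists (/ etap etainv (d a b / d a x)). split. apply Rinv_0_lt_compat; auto.
      intro n. pose proof (Hqs n a b x (not_eq_sym Nxa)) as Q.
      pose proof (lamH_pos n). fold (lamH n) in Q.
      assert (Hax : 0 < d (H n a) (H n x)) by (apply (dist_pos d Hd); intro E; apply Nxa, (Hinj n); auto).
      rewrite (met_sym d Hd (H n x)).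
      set (K1 := etap etainv (d a b / d a x)) in *.
      assert (Q2 : lamH n <= K1 * d (H n a) (H n x)).
      { apply (Rmult_le_compat_r (d (H n a) (H n x))) in Q; [|lra].
        unfold Rdiv in Q. rewrite Rmult_assoc, Rinv_l, Rmult_1_r in Q by lra. lra. }
      apply (Rmult_le_reg_l (K1 * lamH n)). apply Rmult_lt_0_compat; auto.
      replace (K1 * lamH n * / K1) with (lamH n) by (field; lra).
      replace (K1 * lamH n * (d (H n a) (H n x) / lamH n)) with (K1 * d (H n a) (H n x)) by (field; lra).
      lra. }
  destruct Hc1 as (c1 & Hc1 & Hc1n).
  exists (c1 / etap etainv (d x b' / d x z)). split. apply Rdiv_lt_0_compat; auto.
  intro n. pose proof (Hqs n x b' z Hxz) as Q. pose proof (lamH_pos n).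
  specialize (Hc1n n). unfold dd, hs.
  assert (Hxz' : 0 < d (H n x) (H n z)) by (apply (dist_pos d Hd); intro E; apply Hxz, (Hinj n); auto).
  apply (Rmult_le_compat_r (d (H n x) (H n z))) in Q; [|lra].
  unfold Rdiv in Q. rewrite Rmult_assoc, Rinv_l, Rmult_1_r in Q by lra.
  unfold Rdiv in *.
  apply (Rmult_le_reg_r (etap etainv (d x b' * / d x z))); auto.
  replace (c1 * / etap etainv (d x b' * / d x z) * etap etainv (d x b' * / d x z)) with c1 by (field; lra).
  apply Rle_trans with (d (H n x) (H n b') * / lamH n); auto.
  replace (d (H n x) (H n z) * / lamH n * etap etainv (d x b' * / d x z))
    with (etap etainv (d x b' * / d x z) * d (H n x) (H n z) * / lamH n) by ring.
  apply Rmult_le_compat_r. left; apply Rinv_0_lt_compat; auto. exact Q.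
Qed.

Definition fH (x : X) : Z X d U lamH qH := mk X d Hd U lamH qH (hs x).

Lemma fH_dist : forall x y, dZ X d U lamH qH (fH x) (fH y) = D X d U lamH (hs x) (hs y).
Proof. intros. unfold fH. apply dZ_mk; auto using lamH_pos, hs_adm. Qed.

Lemma fH_pos : forall x z, x <> z -> 0 < dZ X d U lamH qH (fH x) (fH z).
Proof.
  intros x z Hxz. rewrite fH_dist. destruct (hs_lower x z Hxz) as (c & Hc & Hcn).
  apply Rlt_le_trans with c; auto. apply D_ge with qH; auto using lamH_pos, hs_adm.
  apply U_all; auto.
Qed.

Lemma fH_qs : qs_inequality d (dZ X d U lamH qH) (etap etainv) fH.
Proof.
  intros x y z Hxz. pose proof (fH_pos x z Hxz) as Hp. rewrite !fH_dist in *.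
  set (K := etap etainv (d x y / d x z)).
  assert (D X d U lamH (hs x) (hs y) <= K * D X d U lamH (hs x) (hs z)).
  { apply (ulim_le U HU (dd X d lamH (hs x) (hs y)) (fun n => K * dd X d lamH (hs x) (hs z) n)).
    apply D_spec with qH; auto using lamH_pos, hs_adm.
    apply ulim_scal; auto. apply D_spec with qH; auto using lamH_pos, hs_adm.
    apply U_all; auto. intro n. unfold dd, hs. pose proof (Hqs n x y z Hxz) as Q. fold K in Q.
    pose proof (lamH_pos n).
    assert (Hxz' : 0 < d (H n x) (H n z)) by (apply (dist_pos d Hd); intro E; apply Hxz, (Hinj n); auto).
    apply (Rmult_le_compat_r (d (H n x) (H n z))) in Q; [|lra].
    unfold Rdiv in *. rewrite Rmult_assoc, Rinv_l, Rmult_1_r in Q by lra.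
    replace (K * (d (H n x) (H n z) * / lamH n)) with (K * d (H n x) (H n z) * / lamH n) by ring.
    apply Rmult_le_compat_r; [left; apply Rinv_0_lt_compat; auto|exact Q]. }
  apply (Rmult_le_reg_r (D X d U lamH (hs x) (hs z))); auto.
  unfold Rdiv. rewrite Rmult_assoc, Rinv_l, Rmult_1_r by lra. lra.
Qed.

Lemma fH_emb : qs_embedding d (dZ X d U lamH qH) (etap etainv) fH.
Proof.
  split; [|apply fH_qs].
  apply qs_homeo with (etap etainv); auto.
  - apply dZ_metric; auto using lamH_pos.
  - intros x z Hxz E. pose proof (fH_pos x z Hxz). rewrite E in H0.
    rewrite (dist_self _ (dZ_metric X d Hd U HU lamH lamH_pos qH)) in H0. lra.
  - apply fH_qs.
  - intros; apply etap_mono with eta; auto.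
  - intros; apply etap_pos with eta; auto.
  - intros; apply etap_small with eta; auto.
  - intro x. destruct (classic (x = a)) as [->|N]. exists b; auto. exists a; auto.
Qed.

End Main.


Lemma half_small : forall e, 0 < e -> exists N, forall n, (N <= n)%nat -> (1/2)^n < e.
Proof.
  intros e He. destruct (pow_lt_1_zero (1/2) ltac:(rewrite Rabs_pos_eq; lra) e He) as [N HN].
  exists N. intros n Hn. specialize (HN n Hn). rewrite Rabs_pos_eq in HN; auto.
  left; apply pow_lt; lra.
Qed.

Theorem main_with_ultra (X : Type) (d : X -> X -> R) (p : X) (eta etainv : R -> R)
  (pn : nat -> X) (U : (nat -> Prop) -> Prop) (HU : ultra U) :
  is_metric d -> is_proper d -> is_doubling d ->
  homeo_nonneg_pair eta etainv ->
  seq_conv d pn p ->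
  (forall n, self_qs_at d eta (pn n)) ->
  exists (Z : Type) (dZ : Z -> Z -> R) (z : Z),
    weak_tangent d p dZ z /\
    exists f : X -> Z, qs_embedding d dZ (eta_prime etainv) f.
Proof.
  intros Hd _ Hdbl Heta Hpn Hself.
  destruct (classic (exists a b : X, a <> b)) as [(a & b & Hab)|Htriv].
  2:{
    assert (Heq : forall x y : X, x = y).
    { intros x y. apply NNPP. intro N. apply Htriv. eauto. }
    exists unit, (fun _ _ => 0), tt. split.
    - split; [|split].
      + constructor; intros; try lra. destruct x, y; split; auto.
      + intros u _. exists tt. intros e He. exists O. intros. lra.
      + exists (fun n => (1/2)^n), (fun _ => p). split; [intro; apply pow_lt; lra|]. split; [|split].
        * intros e He. destruct (half_small e He) as [N HN]. exists N. intros n Hn.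
          rewrite Rminus_0_r, Rabs_pos_eq by (left; apply pow_lt; lra). auto.
        * intros e He. exists O. intros. rewrite (proj2 (met_sep d Hd p p) eq_refl). auto.
        * intros r eps Hr Heps. exists O. intros n _. exists (fun _ => tt). split; auto. split.
          -- exists 0. split; auto. intros x y _ _. rewrite (Heq x y), (proj2 (met_sep d Hd y y) eq_refl).
             unfold Rdiv. rewrite Rmult_0_l, Rminus_0_r, Rabs_R0. lra.
          -- intros w Hw. exists p. rewrite (proj2 (met_sep d Hd p p) eq_refl). split; [|lra].
             unfold Rdiv; rewrite Rmult_0_l; lra.
    - exists (fun _ => tt). split; [split; [|split]|].
      + intros x y _. apply Heq.
      + intros x e He. exists 1. split; [lra|]. intros; lra.
      + intros x e He. exists 1. split; [lra|]. intros y _. rewrite (Heq x y), (proj2 (met_sep d Hd y y) eq_refl). auto.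
      + intros x y z Hxz. exfalso. apply Hxz, Heq. }
  assert (HH : forall n, exists h : X -> X, (forall y, d (pn n) (h y) < (1/2)^n) /\
     (forall y y', h y = h y' -> y = y') /\
     (forall x y z, x <> z -> d (h x) (h y) / d (h x) (h z) <= etap etainv (d x y / d x z))).
  { intro n. apply selfqs_inv with eta; auto. apply pow_lt; lra. }
  set (H := fun n => proj1_sig (constructive_indefinite_description _ (HH n))).
  assert (HHs : forall n, (forall y, d (pn n) (H n y) < (1/2)^n) /\
     (forall y y', H n y = H n y' -> y = y') /\
     (forall x y z, x <> z -> d (H n x) (H n y) / d (H n x) (H n z) <= etap etainv (d x y / d x z))).
  { intro n. unfold H. destruct constructive_indefinite_description; simpl; auto. }
  assert (Hinj : forall n y y', H n y = H n y' -> y = y') by (intro n; apply HHs).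
  assert (Hqs : forall n x y z, x <> z -> d (H n x) (H n y) / d (H n x) (H n z) <= etap etainv (d x y / d x z))
    by (intro n; apply HHs).
  assert (Hclose : forall n y, d (pn n) (H n y) < (1/2)^n) by (intro n; apply HHs).
  set (lam := lamH X d H a b). set (q := qH X H a).
  assert (Hlam : forall n, 0 < lam n) by (apply lamH_pos; auto).
  set (GG := fun n k => Good X d Hd U lam q n (INR (S k)) (/ INR (S k))).
  assert (Hpick : forall m k, exists n, (m <= n)%nat /\ GG n k).
  { intros m k. assert (Hk : 0 < INR (S k)) by (apply lt_0_INR; lia).
    destruct (U_nempty _ HU _ (U_and _ HU _ _ (U_cof _ HU m)
      (Good_U X d Hd U HU lam Hlam q Hdbl (INR (S k)) (/ INR (S k)) Hk (Rinv_0_lt_compat _ Hk)))) as (n & Hn).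
    exists n; auto. }
  set (pick := fun m k => epsilon (inhabits O) (fun n => (m <= n)%nat /\ GG n k)).
  assert (Hpk : forall m k, (m <= pick m k)%nat /\ GG (pick m k) k).
  { intros m k. unfold pick. apply epsilon_spec. apply Hpick. }
  set (nk := nat_rect (fun _ => nat) (pick O O) (fun k nkk => pick (S nkk) (S k))).
  assert (Hnk : forall k, (k <= nk k)%nat /\ GG (nk k) k).
  { induction k as [|k IH]; simpl.
    - split; [lia|]. apply Hpk.
    - destruct (Hpk (S (nk k)) (S k)) as [h1 h2]. fold nk. split; auto. lia. }
  exists (Z X d U lam q), (dZ X d U lam q), (zq X d Hd U lam q). split.
  - split; [apply dZ_metric; auto|split; [apply Z_complete; auto|]].
    exists (fun k => lam (nk k)), (fun k => q (nk k)). split; [intro; apply Hlam|]. split; [|split].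
    + intros e He. destruct (half_small (e/2) ltac:(lra)) as [N HN]. exists N. intros k Hk.
      rewrite Rminus_0_r, Rabs_pos_eq by (left; apply Hlam).
      assert (HN' := HN (nk k) ltac:(pose proof (proj1 (Hnk k)); lia)).
      unfold lam, lamH. pose proof (met_tri d Hd (H (nk k) a) (pn (nk k)) (H (nk k) b)) as T.
      rewrite (met_sym d Hd (H (nk k) a) (pn (nk k))) in T.
      pose proof (Hclose (nk k) a). pose proof (Hclose (nk k) b). lra.
    + intros e He. destruct (half_small (e/2) ltac:(lra)) as [N HN].
      destruct (Hpn (e/2) ltac:(lra)) as [N1 HN1]. exists (Nat.max N N1). intros k Hk.
      pose proof (proj1 (Hnk k)).
      assert (HN' := HN (nk k) ltac:(lia)). assert (HN1' := HN1 (nk k) ltac:(lia)).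
      unfold q, qH. pose proof (met_tri d Hd (H (nk k) a) (pn (nk k)) p) as T.
      rewrite (met_sym d Hd (H (nk k) a) (pn (nk k))) in T. pose proof (Hclose (nk k) a). lra.
    + intros r eps Hr Heps.
      destruct (archimed_cor1 (Rmin (/ (Rabs r + 1)) (eps / 2))) as (N & HN & HN0).
      { apply Rmin_glb_lt. apply Rinv_0_lt_compat. pose proof (Rabs_pos r); lra. lra. }
      exists N. intros k Hk.
      assert (HNpos : 0 < INR N) by (apply lt_0_INR; auto).
      assert (HkN : INR N <= INR (S k)) by (apply le_INR; lia).
      assert (HSk : 0 < INR (S k)) by lra.
      assert (Hr1 : r <= INR (S k)).
      { assert (/ INR N < / (Rabs r + 1)) by (eapply Rlt_le_trans; [exact HN|apply Rmin_l]).
        assert (Rabs r + 1 < INR N).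
        { rewrite <- (Rinv_inv (Rabs r + 1)), <- (Rinv_inv (INR N)).
          apply Rinv_lt_contravar; [|exact H0].
          apply Rmult_lt_0_compat; apply Rinv_0_lt_compat; auto. pose proof (Rabs_pos r); lra. }
        pose proof (Rle_abs r). lra. }
      assert (He1 : 2 * / INR (S k) <= eps).
      { assert (/ INR N < eps / 2) by (eapply Rlt_le_trans; [exact HN|apply Rmin_r]).
        assert (/ INR (S k) <= / INR N) by (apply Rinv_le_contravar; auto). lra. }
      pose proof (proj2 (Hnk k)) as HG. unfold GG in HG.
      apply (Good_mono X d Hd U HU lam Hlam q (nk k) (INR (S k)) (/ INR (S k)) r eps HSk HG Hr1 He1).
      apply Rinv_0_lt_compat; auto.
  - exists (fH X d Hd U H a b). apply fH_emb with eta; auto.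
Qed.

Module UF.
From mathcomp Require Import all_boot classical_sets boolp filter.
Lemma ultra_exists : exists U, ultra U.
Proof.
have [G [GU sFG]] := ultraFilterLemma eventually_filter.
exists G; split.
- move=> A B GA AB; apply: filterS GA; exact AB.
- move=> A B GA GB; exact: (filterI GA GB).
- move=> A GA; exact: (filter_ex GA).
- move=> A; exact: (in_ultra_setVsetC A GU).
- move=> m; apply: sFG; exists m => // n /= /leP; done.
Qed.
End UF.

Theorem theorem1p2 (X : Type) (d : X -> X -> R) (p : X) (eta etainv : R -> R)
  (pn : nat -> X) :
  is_metric d -> is_proper d -> is_doubling d ->
  homeo_nonneg_pair eta etainv ->
  seq_conv d pn p ->
  (forall n, self_qs_at d eta (pn n)) ->
  exists (Z : Type) (dZ : Z -> Z -> R) (z : Z),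
    weak_tangent d p dZ z /\
    exists f : X -> Z, qs_embedding d dZ (eta_prime etainv) f.
Proof.
  destruct UF.ultra_exists as [U HU].
  exact (main_with_ultra X d p eta etainv pn U HU).
Qed.
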